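(* Let $p\ge0$, $q\ge1$, $\mathbf{k}=(k_1,\dots,k_r)$ with $k_i\ge1$, and let $\tilde V$ denote $\tilde V_{\mathbf{k}}(\mathbb{R}^{p,q})$ if $q\ge2$, or a fixed component $\tilde V_{\mathbf{k}}(\mathbb{R}^{p,1})_\Sigma$ if $q=1$. Let $\tilde V^\infty=\tilde V\cup\{\infty\}$ be its one-point compactification. For every $\lambda\in\mathbb{P}(\mathbf{k})$, the subspace $F_\lambda\subseteq\tilde V^\infty$ consisting of $\infty$ together with all $Z\in\tilde V$ with $\omega(Q^Z)\ge\lambda$ is closed in $\tilde V^\infty$.
   Context: $d=p+q$; points of $\mathbb{R}^d$ are written $(\zeta,t)\in\mathbb{R}^{d-1}\times\mathbb{R}$ with projections $\mathrm{pr}_\zeta,\mathrm{pr}_t$; $\mathrm{pr}_1$ is the projection to the first $p$ coordinates. $\tilde V_{\mathbf{k}}(\mathbb{R}^{p,q})\subseteq\prod_i(\mathbb{R}^d)^{k_i}$ consists of tuples $Z=(z_i^j)$ of pairwise distinct points with $\mathrm{pr}_1(z_i^1)=\dots=\mathrm{pr}_1(z_i^{k_i})$ for each $i$; for $q=1$ and $\Sigma=(\sigma_i)\in\prod\mathfrak{S}_{k_i}$, $\tilde V_{\mathbf{k}}(\mathbb{R}^{p,1})_\Sigma$ is the subset where $\mathrm{pr}_t(z_i^{\sigma_i(j)})<\mathrm{pr}_t(z_i^{\sigma_i(j+1)})$ for all $i,j$. Table $T_{\mathbf{k}}=\{(i,j):1\le i\le r,1\le j\le k_i\}$ with lexicographic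 order $<$. A ray partition $Q$ of type $\mathbf{k}$: partition of $T_{\mathbf{k}}$ into nonempty $Q_1,\dots,Q_l$ with total orders $\prec_\beta$, such that $\min(Q_1,<)<\dots<\min(Q_l,<)$ and $\min(Q_\beta,\prec_\beta)=\min(Q_\beta,<)$. It is witnessed by $Z$ if all $z_i^j$, $(i,j)\in Q_\beta$, have the same $\mathrm{pr}_\zeta$, and $(i,j)\prec_\beta(i',j')$ implies $\mathrm{pr}_t(z_i^j)<\mathrm{pr}_t(z_{i'}^{j'})$. Weight $\omega(Q)=(|Q_1|,\dots,|Q_l|)\in\mathbb{P}(\mathbf{k})$, the set of sequences of positive integers summing to $|\mathbf{k}|=\sum k_i$, ordered lexicographically after padding with zeros. For each $Z\in\tilde V$, $Q^Z$ denotes the unique ray partition witnessed by $Z$ of maximal weight among those witnessed by $Z$ (its existence and uniqueness is known). *)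

(* Defs.v *)
From HB Require Import structures.
From mathcomp Require Import all_boot all_order all_algebra all_fingroup.
From mathcomp Require Import all_classical all_reals all_analysis.
Unset Printing Implicit Defensive.
Import Order.TTheory GRing.Theory Num.Theory.
Import numFieldNormedType.Exports.
Local Open Scope classical_set_scope.
Local Open Scope ring_scope.

(* Points of R^d, d = p + q (q >= 1), written (zeta, t) in R^(d-1) x R.   *)
Notation Rpt R p q := ('rV[R]_(p + q.-1) * R)%type.

Definition pr_zeta {R : realType} {p q : nat} (z : Rpt R p q) : 'rV[R]_(p + q.-1) := z.1.
Definition pr_t {R : realType} {p q : nat} (z : Rpt R p q) : R := z.2.
Definition pr_1 {R : realType} {p q : nat} (z : Rpt R p q) : 'rV[R]_p :=
  lsubmx (pr_zeta z).

(* The table T_k = {(i,j) : i < r, j < k_i} (0-based), k = [:: k_1; ...; k_r]. *)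
Definition table (k : seq nat) : finType := {i : 'I_(size k) & 'I_(nth 0%N k i)}.

Definition tab {k : seq nat} {i : 'I_(size k)} (j : 'I_(nth 0%N k i)) : table k :=
  Tagged (fun i0 : 'I_(size k) => 'I_(nth 0%N k i0)) j.

Definition table_lt {k : seq nat} (x y : table k) : bool :=
  (tag x < tag y)%N ||
  ((tag x == tag y :> nat) && ((tagged x : nat) < (tagged y : nat))%N).
Definition table_le {k : seq nat} (x y : table k) : bool :=
  (x == y) || table_lt x y.

Notation config R p q k := {ptws table k -> Rpt R p q}.

Definition Vtilde (R : realType) (p q : nat) (k : seq nat) : set (config R p q k) :=
  [set Z | injective Z /\
     forall (i : 'I_(size k)) (j j' : 'I_(nth 0%N k i)),
       pr_1 (Z (tab j)) = pr_1 (Z (tab j'))].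

Definition Vtilde_Sigma (R : realType) (p : nat) (k : seq nat)
    (Sigma : forall i : 'I_(size k), {perm 'I_(nth 0%N k i)}) : set (config R p 1 k) :=
  [set Z | Vtilde R p 1 k Z /\
     forall (i : 'I_(size k)) (j j' : 'I_(nth 0%N k i)), (j.+1 = j')%N ->
       pr_t (Z (tab (Sigma i j))) < pr_t (Z (tab (Sigma i j')))].

(* Ray partitions of type k.  A ray partition Q_1, ..., Q_l with total     *)
(* orders prec_beta is encoded as a list of blocks, each block being the   *)
(* list of its elements in increasing prec_beta-order.                     *)
Definition ray_partition {k : seq nat} (Q : seq (seq (table k))) : Prop :=
  [/\ perm_eq (flatten Q) (enum (table k)),
      all (fun b => b != [::]) Q,
      (* min(Q_beta, prec_beta) = min(Q_beta, <) *)
      (forall b, b \in Q -> forall x0 x, x \in b -> table_le (head x0 b) x)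
    &
      (forall x0 (a c : nat), (a < c < size Q)%N ->
          table_lt (head x0 (nth [::] Q a)) (head x0 (nth [::] Q c)))].

Definition witnessed {R : realType} {p q : nat} {k : seq nat}
    (Z : config R p q k) (Q : seq (seq (table k))) : Prop :=
  forall b, b \in Q ->
    (forall x y, x \in b -> y \in b -> pr_zeta (Z x) = pr_zeta (Z y)) /\
    pairwise (fun x y => pr_t (Z x) < pr_t (Z y)) b.

Definition weight {k : seq nat} (Q : seq (seq (table k))) : seq nat := map size Q.

Definition Pk (k : seq nat) (lam : seq nat) : Prop :=
  all (fun n => 0 < n)%N lam /\ sumn lam = sumn k.

Fixpoint lex_le_eqsize (s t : seq nat) : bool :=
  match s, t with
  | [::], _ => true
  | _ :: _, [::] => false
  | x :: s', y :: t' => (x < y)%N || ((x == y) && lex_le_eqsize s' t')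
  end.
Definition pad0 (n : nat) (s : seq nat) : seq nat := s ++ nseq (n - size s) 0%N.
Definition lex_le (s t : seq nat) : bool :=
  let n := maxn (size s) (size t) in lex_le_eqsize (pad0 n s) (pad0 n t).

Definition is_QZ {R : realType} {p q : nat} {k : seq nat}
    (Z : config R p q k) (Q : seq (seq (table k))) : Prop :=
  [/\ ray_partition Q, witnessed Z Q &
      forall Q', ray_partition Q' -> witnessed Z Q' -> lex_le (weight Q') (weight Q)].

(* F_lambda inside the one-point compactification of V (a subset of the   *)
(* configurations, with the subspace topology); None is the point at oo.   *)
Definition F_lambda {R : realType} {p q : nat} {k : seq nat}
    (V : set (config R p q k)) (lam : seq nat) :
    set (one_point_compactification (set_type V)) :=
  fun x => match x with
           | None => True
           | Some Z => exists Q, is_QZ (set_val Z) Q /\ lex_le lam (weight Q)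
           end.

(* Main.v *)
Require Import Defs.
From HB Require Import structures.
From mathcomp Require Import all_boot all_order all_algebra all_fingroup.
From mathcomp Require Import all_classical all_reals all_analysis.
From mathcomp Require Import zify.
Import numFieldNormedType.Exports.
Local Open Scope classical_set_scope.
Local Open Scope ring_scope.

Lemma lexeq_trans (s t u : seq nat) :
  lex_le_eqsize s t -> lex_le_eqsize t u -> lex_le_eqsize s u.
Proof.
elim: s t u => [//|x s IH] [//|y t] [//|z u] /=.
case/orP=> [xy|/andP[/eqP-> st]]; case/orP=> [yz|/andP[/eqP<- tu]].
- by rewrite (ltn_trans xy yz).
- by rewrite xy.
- by rewrite yz.
- by rewrite eqxx (IH _ _ st tu) orbT.
Qed.

Lemma lexeq_total (s t : seq nat) : lex_le_eqsize s t || lex_le_eqsize t s.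
Proof.
elim: s t => [//|x s IH] [|y t] //=.
case: (ltngtP x y) => //= _; by rewrite ?orbT ?eqxx /= ?IH.
Qed.

Lemma lexeq_pad (s t : seq nat) m : size s = size t ->
  lex_le_eqsize (s ++ nseq m 0%N) (t ++ nseq m 0%N) = lex_le_eqsize s t.
Proof.
elim: s t => [|x s IH] [|y t] //= => [_|[e]]; last by rewrite IH.
by elim: m => //= m ->.
Qed.

Lemma lex_leE (s t : seq nat) M : (maxn (size s) (size t) <= M)%N ->
  lex_le s t = lex_le_eqsize (pad0 M s) (pad0 M t).
Proof.
move=> hM; rewrite /lex_le /pad0.
set n := maxn _ _.
have hs : (size s <= n)%N by rewrite leq_maxl.
have ht : (size t <= n)%N by rewrite leq_maxr.
have -> : (M - size s = (n - size s) + (M - n))%N by lia.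
have -> : (M - size t = (n - size t) + (M - n))%N by lia.
rewrite !nseqD !catA lexeq_pad // !size_cat !size_nseq; lia.
Qed.

Lemma lex_le_trans (s t u : seq nat) : lex_le s t -> lex_le t u -> lex_le s u.
Proof.
set M := maxn (size s) (maxn (size t) (size u)).
rewrite (@lex_leE s t M); last by rewrite /M; lia.
rewrite (@lex_leE t u M); last by rewrite /M; lia.
rewrite (@lex_leE s u M); last by rewrite /M; lia.
exact: lexeq_trans.
Qed.

Lemma lex_le_total (s t : seq nat) : lex_le s t || lex_le t s.
Proof.
rewrite /lex_le maxnC; exact: lexeq_total.
Qed.

Lemma list_max (T : eqType) (le : rel T) (P : T -> Prop) (s : seq T) x0 :
  (forall a b, le a b || le b a) -> (forall a b c, le a b -> le b c -> le a c) ->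
  x0 \in s -> P x0 ->
  exists x, P x /\ forall y, y \in s -> P y -> le y x.
Proof.
move=> tot tr; elim: s x0 => [//|a s IH] x0.
rewrite inE => hx0 Px0.
have [[y ys Py]|nos] := pselect (exists2 y, y \in s & P y).
  have [x [Px hx]] := IH y ys Py.
  have [Pa|nPa] := pselect (P a).
    have [ax|xa] := orP (tot a x).
      exists x; split => // z; rewrite inE => /orP[/eqP->|zs] Pz; [done|exact: hx].
    exists a; split => // z; rewrite inE => /orP[/eqP->|zs] Pz.
      by have := tot a a; rewrite orbb.
    exact: tr (hx z zs Pz) xa.
  exists x; split => // z; rewrite inE => /orP[/eqP->|zs] Pz; [done|exact: hx].
have Pa : P a.
  case/orP: hx0 => [/eqP<-//|xs]; by exfalso; apply: nos; exists x0.
exists a; split => // z; rewrite inE => /orP[/eqP->|zs] Pz.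
  by have := tot a a; rewrite orbb.
by exfalso; apply: nos; exists z.
Qed.

Fixpoint allseq (N n : nat) : seq (seq nat) :=
  match n with
  | 0 => [:: [::]]
  | n'.+1 => [::] :: [seq a :: s | a <- iota 0 N.+1, s <- allseq N n']
  end.

Lemma mem_allseq N n s : (size s <= n)%N -> all (fun a => a <= N)%N s ->
  s \in allseq N n.
Proof.
elim: n s => [|n IH] [|a s] // hs /andP[aN sN].
change (a :: s \in [::] :: [seq x :: y | x <- iota 0 N.+1, y <- allseq N n]).
rewrite in_cons; apply/orP; right.
apply/allpairsP; exists (a, s); split.
- by rewrite mem_iota add0n ltnS.
- by apply: IH.
- by [].
Qed.

Lemma size_le_sumn (s : seq nat) : all (fun n => 0 < n)%N s -> (size s <= sumn s)%N.
Proof. elim: s => //= a s IH /andP[a0 /IH]; lia. Qed.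

Lemma le_sumn (s : seq nat) a : a \in s -> (a <= sumn s)%N.
Proof. elim: s => //= b s IH; rewrite inE => /orP[/eqP->|/IH]; lia. Qed.

Lemma exists_QZ (R : realType) (p q : nat) (k : seq nat) (Z : config R p q k) Q' :
  ray_partition Q' -> witnessed Z Q' ->
  exists Q, is_QZ Z Q /\ lex_le (weight Q') (weight Q).
Proof.
set N := size (enum (table k)).
have bound : forall Q : seq (seq (table k)), ray_partition Q ->
    weight Q \in allseq N N.
  move=> Q [hp hne _ _].
  have hs : sumn (weight Q) = N by rewrite /N -(perm_size hp) size_flatten.
  have hpos : all (fun n => 0 < n)%N (weight Q).
    rewrite /weight all_map; apply: sub_all hne => b /=; by rewrite lt0n size_eq0.
  apply: mem_allseq; first by rewrite -hs; exact: size_le_sumn.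
  apply/allP => a ha; rewrite -hs; exact: le_sumn.
move=> rQ' wQ'.
pose P w := exists Q, [/\ ray_partition Q, witnessed Z Q & weight Q = w].
have [w [[Q [rQ wQ <-]] hmax]] := @list_max _ lex_le P (allseq N N) (weight Q')
  lex_le_total lex_le_trans (bound _ rQ') (ex_intro _ Q' (And3 rQ' wQ' erefl)).
exists Q; split.
  split => // Q2 r2 w2; apply: hmax; first exact: bound.
  by exists Q2.
apply: hmax; first exact: bound.
by exists Q'.
Qed.
Import Order.TTheory GRing.Theory Num.Theory.

Lemma near_pair (R : realType) (p q : nat) (k : seq nat) (Zc : config R p q k)
  (x y : table k) :
  \forall g \near Zc,
    (pr_zeta (Zc x) <> pr_zeta (Zc y) -> pr_zeta (g x) <> pr_zeta (g y)) /\
    (pr_t (Zc x) < pr_t (Zc y) -> pr_t (g x) < pr_t (g y)).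
Proof.
have FZ : Filter (nbhs Zc) by apply: nbhs_filter.
have cont : forall (i : table k) (S : set (Rpt R p q)), nbhs (Zc i) S ->
    \forall g \near Zc, S (g i).
  move=> i S hS; exact: (@proj_continuous _ (fun _ => Rpt R p q) i Zc S hS).
have contz : forall (i : table k) A, nbhs (pr_zeta (Zc i)) A ->
    \forall g \near Zc, A (pr_zeta (g i)).
  move=> i A hA; apply: (cont i (fun z => A (pr_zeta z))); exact: (@cvg_fst _ _ (nbhs (Zc i).1) (nbhs (Zc i).2) _ A hA).
have contt : forall (i : table k) A, nbhs (pr_t (Zc i)) A ->
    \forall g \near Zc, A (pr_t (g i)).
  move=> i A hA; apply: (cont i (fun z => A (pr_t z))); exact: (@cvg_snd _ _ (nbhs (Zc i).1) (nbhs (Zc i).2) _ A hA).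
have H1 : \forall g \near Zc,
    (pr_zeta (Zc x) <> pr_zeta (Zc y) -> pr_zeta (g x) <> pr_zeta (g y)).
  have [neq|nneq] := pselect (pr_zeta (Zc x) <> pr_zeta (Zc y)); last first.
    by apply: (@nearW _ (nbhs Zc)) => g /nneq.
  have [A [B [hA hB dis]]] : exists A B, [/\ nbhs (pr_zeta (Zc x)) A,
      nbhs (pr_zeta (Zc y)) B & forall u, A u -> B u -> False].
    apply: contrapT => hn; apply: neq; apply: norm_hausdorff => A B hA hB.
    apply: contrapT => e; apply: hn; exists A, B; split => // u Au Bu.
    by apply: e; exists u.

  near=> g => _ eq.
  have ga : A (pr_zeta (g x)) by near: g; exact: contz x A hA.
  have gb : B (pr_zeta (g y)) by near: g; exact: contz y B hB.
  by apply: (dis _ ga); rewrite eq.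
have H2 : \forall g \near Zc,
    (pr_t (Zc x) < pr_t (Zc y) -> pr_t (g x) < pr_t (g y)).
have [lt|nlt] := pselect (pr_t (Zc x) < pr_t (Zc y)); last first.
  by apply: (@nearW _ (nbhs Zc)) => g /nlt.
set m := (pr_t (Zc x) + pr_t (Zc y)) / 2.
have [h1 h2] := midf_lt lt.
near=> g => _.
have g1 : pr_t (g x) < m by near: g; exact: contt x _ (lt_nbhsl h1).
have g2 : m < pr_t (g y) by near: g; exact: contt y _ (lt_nbhsr h2).
exact: lt_trans g1 g2.
near=> g; split; near: g; [exact: H1 | exact: H2].
Unshelve. all: by end_near.
Qed.

Lemma near_witness (R : realType) (p q : nat) (k : seq nat) (Zc : config R p q k) :
  injective Zc ->
  \forall g \near Zc, forall Q, witnessed g Q -> witnessed Zc Q.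
Proof.
move=> injZ.
have FZ : Filter (nbhs Zc) by apply: nbhs_filter.
have H := @filter_forall _ (table k * table k)%type
  (fun xy g => (pr_zeta (Zc xy.1) <> pr_zeta (Zc xy.2) -> pr_zeta (g xy.1) <> pr_zeta (g xy.2)) /\
    (pr_t (Zc xy.1) < pr_t (Zc xy.2) -> pr_t (g xy.1) < pr_t (g xy.2))) _ FZ
  (fun xy => @near_pair R p q k Zc xy.1 xy.2).
near=> g => Q W b bQ.
have Hg : forall xy : (table k * table k)%type,
   (pr_zeta (Zc xy.1) <> pr_zeta (Zc xy.2) -> pr_zeta (g xy.1) <> pr_zeta (g xy.2)) /\
    (pr_t (Zc xy.1) < pr_t (Zc xy.2) -> pr_t (g xy.1) < pr_t (g xy.2)).
  by near: g; exact: H.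
have [W1 W2] := W b bQ.
have zeq : forall x y, x \in b -> y \in b -> pr_zeta (Zc x) = pr_zeta (Zc y).
  move=> x y xb yb; apply: contrapT => neq.
  exact: (Hg (x, y)).1 neq (W1 x y xb yb).
split => //.
apply: (sub_in_pairwise (P := mem b)) W2; last by apply/allP.
move=> x y xb yb /= lt.
have xy : x != y by apply/eqP => e; move: lt; rewrite e ltxx.
have ez := zeq x y xb yb.
have nt : pr_t (Zc x) != pr_t (Zc y).
  apply/eqP => et; move/eqP: xy; apply; apply: injZ.
  by rewrite [Zc x]surjective_pairing [Zc y]surjective_pairing; congr pair.
case: (ltgtP (pr_t (Zc x)) (pr_t (Zc y))) nt => // yx _.
have := (Hg (y, x)).2 yx => /= lt'.
by move: (lt_trans lt lt'); rewrite ltxx.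
Unshelve. all: by end_near.
Qed.

Lemma F_closed (R : realType) (p q : nat) (k : seq nat) (V : set (config R p q k))
  (lam : seq nat) : (forall Z, V Z -> injective Z) -> closed (F_lambda V lam).
Proof.
move=> Vinj.
rewrite -[F_lambda V lam]setCK; apply: open_closedC.
rewrite openE => -[Z|] nFx; last by exfalso; apply: nFx.
have injZ : injective (set_val Z).
  apply: Vinj; exact: set_valP.
have key := @near_witness R p q k (set_val Z) injZ.
have key' : \forall Z' \near Z, forall Q, witnessed (set_val Z') Q -> witnessed (set_val Z) Q.
  exact: (@initial_continuous _ _ (@set_val _ V) Z _ key).
change (nbhs Z (fun Z' => ~ F_lambda V lam (Some Z'))).
apply: filterS key' => Z' hZ' [Q [[rQ wQ _] lamQ]].
have [Q0 [QZ0 le0]] := @exists_QZ R p q k (set_val Z) Q rQ (hZ' Q wQ).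
apply: nFx; exists Q0; split => //; exact: lex_le_trans lamQ le0.
Qed.

Theorem lemma3p12 (R : realType) (p q : nat) (k : seq nat) :
  (0 < q)%N -> (0 < size k)%N -> all (fun n => 0 < n)%N k ->
  forall lam : seq nat, Pk k lam ->
  ((1 < q)%N -> closed (F_lambda (Vtilde R p q k) lam)) /\
  (q = 1%N -> forall Sigma : (forall i : 'I_(size k), {perm 'I_(nth 0%N k i)}),
     closed (F_lambda (Vtilde_Sigma R p k Sigma) lam)).
Proof.
move=> _ _ _ lam _; split.
  by move=> _; apply: F_closed => Z [].
by move=> _ Sigma; apply: F_closed => Z [[]].
Qed.
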